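(* Let $n\ge 1$, $0\le w\le n$, and let $U$ be an $n$-qubit Clifford operator that is a product of Clifford operators each of which acts either trivially on the first $w$ qubits or only as the control of a CNOT on them; in particular its symplectic matrix $M\in\mathrm{Sp}(2n,\mathbb{F}_2)$ satisfies $f_iM=f_i$ for all $1\le i\le w$. Then there exist vectors $u_1,\dots,u_{2w}\in\mathbb{F}_2^{2n}$ such that $$M' := M\, S_{u_1} S_{u_2}\cdots S_{u_{2w}}$$ satisfies $e_iM'=e_i$ and $f_iM'=f_i$ for all $1\le i\le w$, and $bM'\in\mathrm{span}\{e_j,f_j : w<j\le n\}$ for every $b\in\{e_j,f_j: w<j\le n\}$. That is, $2w$ Pauli $\pi/4$ rotations suffice to turn $U$ into a Clifford operator (up to Pauli operators and phases) supported only on the last $n-w$ qubits.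
   Context: Paulis and Cliffords are represented in the binary symplectic formalism. An $n$-qubit Pauli operator is identified (up to phase) with a row vector $v\in\mathbb{F}_2^{2n}$ via $P_v=\prod_{i=1}^n X_i^{v_i}Z_i^{v_{n+i}}$. The symplectic form is $\langle u,v\rangle=uJv^T$ with $J=\begin{bmatrix}0&I_n\\ I_n&0\end{bmatrix}$; $P_u,P_v$ commute iff $\langle u,v\rangle=0$. Let $e_1,\dots,e_{2n}$ be the standard basis of $\mathbb{F}_2^{2n}$ and $f_k:=e_{n+k}$ ($e_k$ corresponds to $X_k$, $f_k$ to $Z_k$). A Clifford $U$ is represented (ignoring Pauli corrections and phases) by a matrix $M_U$ with $M_UJM_U^T=J$, acting by $v\mapsto vM_U$ (conjugation $P\mapsto UPU^\dagger$); its $i$-th row is the image of the $i$-th basis vector. The Pauli $\pi/4$ rotation $R_{\pi/4}(P_u)$ maps $P\mapsto PP_u$ if $P$ anticommutes with $P_u$ and fixes $P$ otherwise; in symplectic form it acts as the transvection $E_u(v)=v+\langle u,v\rangle u$, whose matrix (row-vector convention $v\mapsto vS_u$) is denoted $S_u$. *)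

(* Defs.v *)
From HB Require Import structures.
From mathcomp Require Import all_boot all_order all_algebra.
Set Implicit Arguments. Unset Strict Implicit. Unset Printing Implicit Defensive.
Import GRing.Theory.
Local Open Scope ring_scope.

Notation F2 := 'F_2.

Section Symp.
Variable n : nat.

(* Coordinates of F_2^{2n} are indexed by 'I_(n + n):
   lshift n k  ~ coordinate k   (X part, e_k),
   rshift n k  ~ coordinate n+k (Z part, f_k = e_{n+k}). *)
Definition evec (k : 'I_n) : 'rV[F2]_(n + n) := delta_mx 0 (lshift n k).
Definition fvec (k : 'I_n) : 'rV[F2]_(n + n) := delta_mx 0 (rshift n k).

Definition Jmx : 'M[F2]_(n + n) := block_mx 0 1%:M 1%:M 0.

Definition sform (u v : 'rV[F2]_(n + n)) : F2 := (u *m Jmx *m v^T) 0 0.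

Definition symplectic (M : 'M[F2]_(n + n)) : Prop := M *m Jmx *m M^T = Jmx.

(* Transvection matrix S_u (row-vector convention):
   v *m S_u = v + <v,u> u = v + <u,v> u  (the form is symmetric over F_2). *)
Definition transv (u : 'rV[F2]_(n + n)) : 'M[F2]_(n + n) :=
  1%:M + (Jmx *m u^T) *m u.

(* Symplectic matrix of CNOT with control c and target t:
   X_c -> X_c X_t, Z_t -> Z_c Z_t, all other generators fixed. *)
Definition cnot_mx (c t : 'I_n) : 'M[F2]_(n + n) :=
  1%:M + delta_mx (lshift n c) (lshift n t) + delta_mx (rshift n t) (rshift n c).

Definition trivial_on_first (w : nat) (G : 'M[F2]_(n + n)) : Prop :=
  symplectic G /\
  forall i : 'I_n, (i < w)%N -> evec i *m G = evec i /\ fvec i *m G = fvec i.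

Definition allowed_gate (w : nat) (G : 'M[F2]_(n + n)) : Prop :=
  trivial_on_first w G \/
  exists c t : 'I_n, [/\ (c < w)%N, (w <= t)%N & G = cnot_mx c t].

Definition prod_mx (gs : seq 'M[F2]_(n + n)) : 'M[F2]_(n + n) :=
  foldr (fun G A => G *m A) 1%:M gs.

Definition apply_transv (M : 'M[F2]_(n + n)) (us : seq 'rV[F2]_(n + n)) :=
  foldl (fun A u => A *m transv u) M us.

(* v lies in span{e_j, f_j : w < j <= n} (1-based), i.e. in span of the
   coordinates with 0-based index >= w in both halves. *)
Definition in_last_span (w : nat) (v : 'rV[F2]_(n + n)) : Prop :=
  forall i : 'I_n, (i < w)%N -> v 0 (lshift n i) = 0 /\ v 0 (rshift n i) = 0.

End Symp.

(* Main.v *)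
Require Import Defs.
From mathcomp Require Import all_boot all_order all_algebra.
From mathcomp Require Import ring.
Import GRing.Theory.
Local Open Scope ring_scope.
Set Implicit Arguments. Unset Strict Implicit.

Lemma F2_cases (x : 'F_2) : x = 0 \/ x = 1.
Proof. case: x => [[|[|m]]] Hm; [left|right|]; try exact: val_inj. by []. Qed.
Lemma F2_add (x : 'F_2) : x + x = 0.
Proof. case: (F2_cases x) => ->; first by rewrite addr0. by apply: val_inj. Qed.
Lemma vec_add (m : nat) (x : 'rV['F_2]_m) : x + x = 0.
Proof. by apply/matrixP => i j; rewrite !mxE F2_add. Qed.

Lemma uJ n (u : 'rV['F_2]_(n + n)) : u *m Jmx n = row_mx (rsubmx u) (lsubmx u).
Proof.
by rewrite /Jmx -{1}(hsubmxK u) mul_row_block !mulmx0 !mulmx1 add0r addr0.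
Qed.

Lemma sform_delta n (u : 'rV['F_2]_(n + n)) k :
  sform u (delta_mx 0 k) = (u *m Jmx n) 0 k.
Proof.
rewrite /sform trmx_delta mxE (bigD1 k) //= big1 ?addr0.
  by rewrite [delta_mx _ _ _ _]mxE !eqxx mulr1.
by move=> j /negbTE hj; rewrite [delta_mx _ _ _ _]mxE hj mulr0.
Qed.

Lemma sform_f n (u : 'rV['F_2]_(n + n)) i : sform u (fvec i) = u 0 (lshift n i).
Proof. by rewrite sform_delta uJ row_mxEr mxE. Qed.
Lemma sform_e n (u : 'rV['F_2]_(n + n)) i : sform u (evec i) = u 0 (rshift n i).
Proof. by rewrite sform_delta uJ row_mxEl mxE. Qed.

Lemma sform_sym n (u v : 'rV['F_2]_(n + n)) : sform u v = sform v u.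
Proof.
have hJ : (Jmx n)^T = Jmx n by rewrite /Jmx tr_block_mx !trmx0 trmx1.
rewrite /sform.
have -> : (u *m Jmx n *m v^T) 0 0 = ((u *m Jmx n *m v^T)^T) 0 0 by rewrite [RHS]mxE.
by rewrite !trmx_mul trmxK hJ mulmxA.
Qed.
Arguments sform_sym {n}.

Lemma sformDl n (x y z : 'rV['F_2]_(n + n)) : sform (x + y) z = sform x z + sform y z.
Proof. by rewrite /sform !mulmxDl mxE. Qed.
Lemma sformZl n a (x z : 'rV['F_2]_(n + n)) : sform (a *: x) z = a * sform x z.
Proof. by rewrite /sform -!scalemxAl mxE. Qed.
Lemma sformDr n (x y z : 'rV['F_2]_(n + n)) : sform z (x + y) = sform z x + sform z y.
Proof. by rewrite !(sform_sym z) sformDl. Qed.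
Lemma sformZr n a (x z : 'rV['F_2]_(n + n)) : sform z (a *: x) = a * sform z x.
Proof. by rewrite !(sform_sym z) sformZl. Qed.

Lemma sform_alt n (u : 'rV['F_2]_(n + n)) : sform u u = 0.
Proof.
rewrite /sform uJ -{3}(hsubmxK u) tr_row_mx mul_row_col mxE.
have -> : (lsubmx u *m (rsubmx u)^T) 0 0 = ((lsubmx u *m (rsubmx u)^T)^T) 0 0
  by rewrite [RHS]mxE.
by rewrite trmx_mul trmxK F2_add.
Qed.

Lemma transvE n (u v : 'rV['F_2]_(n + n)) : v *m transv u = v + sform v u *: u.
Proof.
rewrite /transv mulmxDr mulmx1 !mulmxA.
by rewrite [v *m Jmx n *m u^T]mx11_scalar mul_scalar_mx.
Qed.

Lemma transv0 n : transv (0 : 'rV['F_2]_(n + n)) = 1%:M.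
Proof. by rewrite /transv !mulmx0 addr0. Qed.

Definition preserves n (M : 'M['F_2]_(n + n)) :=
  forall x y, sform (x *m M) (y *m M) = sform x y.

Lemma preservesM n (A B : 'M['F_2]_(n + n)) :
  preserves A -> preserves B -> preserves (A *m B).
Proof. by move=> hA hB x y; rewrite !mulmxA hB hA. Qed.

Lemma preserves1 n : preserves (1%:M : 'M['F_2]_(n + n)).
Proof. by move=> x y; rewrite !mulmx1. Qed.

Lemma preserves_sympl n (A : 'M['F_2]_(n + n)) : symplectic A -> preserves A.
Proof.
move=> hA x y; rewrite /sform trmx_mul.
have -> : x *m A *m Jmx n *m (A^T *m y^T) = x *m (A *m Jmx n *m A^T) *m y^T
  by rewrite !mulmxA.
by rewrite hA.
Qed.

Lemma preserves_transv n (u : 'rV['F_2]_(n + n)) : preserves (transv u).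
Proof.
move=> x y; rewrite !transvE !sformDl !sformDr !sformZl !sformZr sform_alt.
rewrite (sform_sym u y).
set p := sform x u; set q := sform y u; set s := sform x y.
have -> : s + q * p + (p * q + p * (q * 0)) = s + (p * q + p * q) by ring.
by rewrite F2_add addr0.
Qed.

Lemma delta_ll n (i k : 'I_n) : (evec i : 'rV['F_2]_(n + n)) 0 (lshift n k) = (i == k)%:R.
Proof. by rewrite mxE eq_lshift eq_sym. Qed.
Lemma delta_lr n (i k : 'I_n) : (evec i : 'rV['F_2]_(n + n)) 0 (rshift n k) = 0.
Proof. by rewrite mxE eq_rlshift andbF. Qed.
Lemma delta_rr n (i k : 'I_n) : (fvec i : 'rV['F_2]_(n + n)) 0 (rshift n k) = (i == k)%:R.
Proof. by rewrite mxE eq_rshift eq_sym. Qed.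
Lemma delta_rl n (i k : 'I_n) : (fvec i : 'rV['F_2]_(n + n)) 0 (lshift n k) = 0.
Proof. by rewrite mxE eq_lrshift andbF. Qed.

Lemma sform_ef n (i k : 'I_n) : sform (evec i : 'rV['F_2]_(n + n)) (fvec k) = (i == k)%:R.
Proof. by rewrite sform_f delta_ll. Qed.
Lemma sform_fe n (i k : 'I_n) : sform (fvec i : 'rV['F_2]_(n + n)) (evec k) = (i == k)%:R.
Proof. by rewrite sform_e delta_rr. Qed.
Lemma sform_ee n (i k : 'I_n) : sform (evec i : 'rV['F_2]_(n + n)) (evec k) = 0.
Proof. by rewrite sform_e delta_lr. Qed.
Lemma sform_ff n (i k : 'I_n) : sform (fvec i : 'rV['F_2]_(n + n)) (fvec k) = 0.
Proof. by rewrite sform_f delta_rl. Qed.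

Lemma mul_delta n (x : 'rV['F_2]_(n + n)) (a b : 'I_(n + n)) : x *m delta_mx a b = x 0 a *: delta_mx 0 b.
Proof.
rewrite -(mul_delta_mx (0 : 'I_1)) mulmxA -colE [col a x]mx11_scalar mul_scalar_mx.
by rewrite mxE.
Qed.

Lemma cnotE n (c t : 'I_n) (x : 'rV['F_2]_(n + n)) :
  x *m cnot_mx c t = x + sform x (fvec c) *: evec t + sform x (evec t) *: fvec c.
Proof. by rewrite /cnot_mx !mulmxDr mulmx1 !mul_delta sform_f sform_e. Qed.

Lemma preserves_pair n (A : 'M['F_2]_(n + n)) a b :
  (forall x, x *m A = x + sform x b *: a + sform x a *: b) ->
  sform a a = 0 -> sform b b = 0 -> sform a b = 0 -> preserves A.
Proof.
move=> hA haa hbb hab x y; rewrite !hA !sformDl !sformDr !sformZl !sformZr.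
rewrite haa hbb hab (sform_sym b a) hab (sform_sym a y) (sform_sym b y).
set p := sform x b; set q := sform x a; set r := sform y b; set s := sform y a.
set z := sform x y.
transitivity (z + ((r * q + s * p) + (r * q + s * p))); first ring.
by rewrite F2_add addr0.
Qed.

Definition fixf n w (M : 'M['F_2]_(n + n)) :=
  forall i : 'I_n, (i < w)%N -> fvec i *m M = fvec i.
Definition fixe n k (M : 'M['F_2]_(n + n)) :=
  forall i : 'I_n, (i < k)%N -> evec i *m M = evec i.

Lemma gate_props n w (G : 'M['F_2]_(n + n)) :
  allowed_gate w G -> preserves G /\ fixf w G.
Proof.
case=> [[hs hf] | [c [t [hc ht ->]]]].
  by split; [exact: preserves_sympl | move=> i hi; case: (hf i hi)].
split.
  apply: (@preserves_pair _ _ (evec t) (fvec c)).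
  - by move=> x; rewrite cnotE.
  - exact: sform_ee.
  - exact: sform_ff.
  rewrite sform_ef.
  have -> : (t == c) = false.
    by apply/negbTE; apply/eqP => htc; move: (leq_trans hc ht); rewrite htc ltnn.
  by [].
move=> i hi; rewrite cnotE sform_ff sform_fe scale0r addr0.
have -> : (i == t) = false by apply: ltn_eqF; exact: leq_trans hi ht.
by rewrite scale0r addr0.
Qed.

Lemma prod_props n w (gs : seq 'M['F_2]_(n + n)) :
  (forall G, G \in gs -> allowed_gate w G) -> preserves (prod_mx gs) /\ fixf w (prod_mx gs).
Proof.
elim: gs => [|G gs IH] hgs /=.
  by split; [exact: preserves1 | move=> i _; rewrite mulmx1].
have [hp hf] : preserves (prod_mx gs) /\ fixf w (prod_mx gs).
  by apply: IH => G' h; apply: hgs; rewrite inE h orbT.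
have [gp gf] := gate_props (hgs G (mem_head _ _)).
split; first exact: preservesM.
by move=> i hi; rewrite mulmxA gf // hf.
Qed.

Lemma stepA n w (M : 'M['F_2]_(n + n)) (k : 'I_n) : (k < w)%N ->
  preserves M -> fixf w M -> fixe k M ->
  exists u, [/\ preserves (M *m transv u), fixf w (M *m transv u),
    fixe k (M *m transv u) & sform (evec k) (evec k *m (M *m transv u)) = 1].
Proof.
move=> hk hp hf he.
case: (F2_cases (sform (evec k) (evec k *m M))) => h; last first.
  by exists 0; rewrite transv0 mulmx1.
exists (fvec k); split.
- exact: preservesM (preserves_transv _).
- by move=> i hi; rewrite mulmxA hf // transvE sform_ff scale0r addr0.
- move=> i hi; rewrite mulmxA he // transvE sform_ef.
  have -> : (i == k) = false by apply: ltn_eqF.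
  by rewrite scale0r addr0.
have ha : sform (evec k *m M) (fvec k) = 1 by rewrite -(hf k hk) hp sform_ef eqxx.
by rewrite mulmxA transvE sformDr sformZr h add0r ha sform_ef eqxx mul1r.
Qed.

Lemma stepB n w (M : 'M['F_2]_(n + n)) (k : 'I_n) : (k < w)%N ->
  preserves M -> fixf w M -> fixe k M -> sform (evec k) (evec k *m M) = 1 ->
  exists u, [/\ preserves (M *m transv u), fixf w (M *m transv u) &
    fixe k.+1 (M *m transv u)].
Proof.
move=> hk hp hf he h1.
exists (evec k *m M + evec k); split.
- exact: preservesM (preserves_transv _).
- move=> i hi; rewrite mulmxA hf // transvE sformDr.
  have -> : sform (fvec i) (evec k *m M) = sform (fvec i) (evec k)
    by rewrite -{1}(hf i hi) hp.
  by rewrite F2_add scale0r addr0.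
move=> i; rewrite ltnS leq_eqVlt => /orP[/eqP hik | hik].
  have -> : i = k by apply: val_inj.
  rewrite mulmxA transvE sformDr sform_alt add0r sform_sym h1 scale1r.
  by rewrite addrA vec_add add0r.
rewrite mulmxA he // transvE sformDr.
have -> : sform (evec i) (evec k *m M) = 0 by rewrite -{1}(he i hik) hp sform_ee.
by rewrite sform_ee addr0 scale0r addr0.
Qed.

Lemma loop n w (M : 'M['F_2]_(n + n)) : (w <= n)%N -> preserves M -> fixf w M ->
  forall k, (k <= w)%N -> exists us : seq 'rV['F_2]_(n + n), size us = (2 * k)%N /\
  [/\ preserves (apply_transv M us), fixf w (apply_transv M us) &
      fixe k (apply_transv M us)].
Proof.
move=> hw hp hf; elim=> [|k IH] hk.
  by exists [::]; split => //; split => // i; rewrite ltn0.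
have [us [hs [p f e]]] := IH (ltnW hk).
pose k' : 'I_n := Ordinal (leq_trans hk hw).
have [u1 [p1 f1 e1 s1]] := @stepA n w _ k' hk p f e.
have [u2 [p2 f2 e2]] := @stepB n w _ k' hk p1 f1 e1 s1.
exists (us ++ [:: u1; u2]); rewrite size_cat hs /=; split; first by rewrite mulnSr.
by rewrite /apply_transv foldl_cat /=.
Qed.

Theorem lemmaA2 (n w : nat) (hn : (0 < n)%N) (hw : (w <= n)%N)
  (M : 'M['F_2]_(n + n))
  (hU : exists gs : seq 'M['F_2]_(n + n),
          (forall G, G \in gs -> allowed_gate w G) /\ M = prod_mx gs) :
  exists us : seq 'rV['F_2]_(n + n),
    size us = (2 * w)%N /\
    let M' := apply_transv M us in
    (forall i : 'I_n, (i < w)%N ->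
       evec i *m M' = evec i /\ fvec i *m M' = fvec i) /\
    (forall j : 'I_n, (w <= j)%N ->
       in_last_span w (evec j *m M') /\ in_last_span w (fvec j *m M')).
Proof.
have [gs [hg ->]] := hU.
have [hp0 hf0] := prod_props hg.
have [us [hs [hp hf he]]] := loop hw hp0 hf0 (leqnn w).
exists us; split => //=.
split; first by move=> i hi; split; [exact: he | exact: hf].
move=> j hj.
have hne : forall i : 'I_n, (i < w)%N -> (j == i) = false.
  by move=> i hi; rewrite eq_sym; apply: ltn_eqF; exact: leq_trans hi hj.
split=> i hi; split.
- by rewrite -sform_f -(hf i hi) hp sform_ef hne.
- by rewrite -sform_e -(he i hi) hp sform_ee.
- by rewrite -sform_f -(hf i hi) hp sform_ff.
- by rewrite -sform_e -(he i hi) hp sform_fe hne.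
Qed.
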